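(* The matrix $\Gamma^{\mathrm{OB}}$ is $(m+1,1/m)$-admissible and implementable with complexity $m$ (with respect to learner actions $\mathcal B_m$, adversary actions = threshold vectors $\vec p\in[0,1]^k$, and payoff $u(\vec b,\vec p)$).
   Context: Online bidding in simultaneous second-price auctions with $k$ items: a bidder has valuation $v:\{0,1\}^k\to\{0,1/m,\dots,m/m\}$ with $v(\vec 0)=0$. Against a threshold vector $\vec p\in[0,1]^k$ (the highest competing bids), a bid vector $\vec b$ wins the bundle $\vec q(\vec b,\vec p)$ with $q_j=\mathbf 1(b_j>p_j)$ and has utility $u(\vec b,\vec p)=v(\vec q(\vec b,\vec p))-\vec p\cdot\vec q(\vec b,\vec p)$. $\mathcal B_m$ is the set of bid vectors $\vec b\in\{0,1/m,\dots,1\}^k$ satisfying no-overbidding: $\vec b\cdot\vec q\le v(\vec q)$ for all $\vec q\in\{0,1\}^k$. $\Gamma^{\mathrm{OB}}$ is the $|\mathcal B_m|\times k$ matrix with row $\Gamma^{\mathrm{OB}}_{\vec b}=\vec b$. A matrix $\Gamma$ is $(\kappa,\delta)$-admissible if its rows are distinct, each column has at most $\kappa$ distinct values, and distinct values within a column differ by at least $\delta$; it is implementable with complexity $M$ if for each column $j$ there is a finite set $S_j$ of pairs $(w,\vec p)$ with $w\ge0$, $|S_j|\le M$, and $\Gamma_{\vec b j}-\Gamma_{\vec b'j}=\sum_{(w,\vec p)\in S_j}w(u(\vec b,\vec p)-u(\vec b',\vec p))$ for all $\vec b,\vec b'\in\mathcal B_m$. *)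

(* Defs.v *)
From HB Require Import structures.
From mathcomp Require Import all_boot all_order all_algebra.
From Stdlib Require List.
Set Implicit Arguments. Unset Strict Implicit. Unset Printing Implicit Defensive.
Import Order.TTheory GRing.Theory Num.Theory.
Local Open Scope ring_scope.

Section Auction.
Variables (R : realFieldType) (k m : nat).

Definition bundle := {ffun 'I_k -> bool}.
Definition empty_bundle : bundle := [ffun => false].

(* grid values {0,1/m,...,m/m} are represented by their numerators in 'I_(m+1) *)
Definition gridval (a : 'I_m.+1) : R := (a%:R) / (m%:R).

Definition bid := {ffun 'I_k -> 'I_m.+1}.
Definition bidval (b : bid) (j : 'I_k) : R := gridval (b j).

Variable v : bundle -> 'I_m.+1.
Definition value (q : bundle) : R := gridval (v q).

Definition won (b : bid) (p : 'I_k -> R) : bundle := [ffun j => p j < bidval b j].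

Definition util (b : bid) (p : 'I_k -> R) : R :=
  value (won b p) - \sum_(j < k) (if won b p j then p j else 0).

Definition no_overbid (b : bid) : bool :=
  [forall q : bundle, \sum_(j < k) (if q j then bidval b j else 0) <= value q].

Definition Bm : {pred bid} := fun b => no_overbid b.

Definition GammaOB (b : bid) (j : 'I_k) : R := bidval b j.

Definition threshold (p : 'I_k -> R) : Prop := forall j, 0 <= p j <= 1.

End Auction.

Definition admissible (R : realFieldType) (T : finType) (k : nat) (A : {pred T})
  (G : T -> 'I_k -> R) (kappa : nat) (delta : R) : Prop :=
  (forall b b', b \in A -> b' \in A -> (forall j, G b j = G b' j) -> b = b') /\
  (forall j, (size (undup [seq G b j | b <- enum A]) <= kappa)%N) /\
  (forall j b b', b \in A -> b' \in A -> G b j != G b' j ->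
     delta <= `|G b j - G b' j|).

Definition implementable (R : realFieldType) (T : finType) (k : nat) (A : {pred T})
  (G : T -> 'I_k -> R) (u : T -> ('I_k -> R) -> R) (M : nat) : Prop :=
  forall j : 'I_k, exists S : seq (R * ('I_k -> R)),
    (size S <= M)%N /\
    (forall x, List.In x S -> 0 <= x.1 /\ threshold x.2) /\
    (forall b b', b \in A -> b' \in A ->
       G b j - G b' j = \sum_(x <- S) x.1 * (u b x.2 - u b' x.2)).

(* Main.v *)
Require Import Defs.
From HB Require Import structures.
From mathcomp Require Import all_boot all_order all_algebra.
Import Order.TTheory GRing.Theory Num.Theory.
Local Open Scope ring_scope.

Section Helpers.
Variables (R : realFieldType) (k m : nat) (hm : (0 < m)%N).
Variables (v : bundle k -> 'I_m.+1).
Hypothesis hv : nat_of_ord (v (empty_bundle k)) = 0%N.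

Lemma m_gt0 : 0 < (m%:R : R).
Proof. by rewrite ltr0n. Qed.

Lemma gridval_lt (a : nat) (b : 'I_m.+1) :
  ((a%:R / m%:R : R) < gridval R b) = (a < b)%N.
Proof. by rewrite /gridval ltr_pM2r ?invr_gt0 ?m_gt0 // ltr_nat. Qed.

Lemma gridval_le1 (b : 'I_m.+1) : gridval R b <= 1.
Proof.
rewrite /gridval ler_pdivrMr ?m_gt0 // mul1r ler_nat.
by have := ltn_ord b; rewrite ltnS.
Qed.

Lemma gridval_inj (a b : 'I_m.+1) : gridval R a = gridval R b -> a = b.
Proof.
rewrite /gridval => /(mulIf (invr_neq0 (lt0r_neq0 m_gt0))) /eqP.
by rewrite eqr_nat => /eqP H; apply: val_inj.
Qed.

Definition ej (j : 'I_k) : bundle k := [ffun j' => j' == j].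

Lemma sum_ej (j : 'I_k) (F : 'I_k -> R) :
  \sum_(j' < k) (if ej j j' then F j' else 0) = F j.
Proof.
rewrite (eq_bigr (fun j' => if j' == j then F j' else 0)); last by move=> i _; rewrite ffunE.
by rewrite -big_mkcond big_pred1_eq.
Qed.

Lemma bid_le_value (b : bid k m) (j : 'I_k) :
  b \in Bm R v -> bidval R b j <= value R v (ej j).
Proof.
rewrite unfold_in /Bm /no_overbid => /forallP /(_ (ej j)).
by rewrite sum_ej.
Qed.

Definition tt_ (i : nat) : R := i%:R / m%:R.
Definition pp (j : 'I_k) (i : nat) : 'I_k -> R :=
  fun j' => if j' == j then tt_ i else 1.
Definition ww (j : 'I_k) (i : nat) : R :=
  if tt_ i < value R v (ej j) then (1 / m%:R) / (value R v (ej j) - tt_ i) else 0.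

Lemma won_pp (b : bid k m) j i :
  won b (pp j i) = if (i < b j)%N then ej j else empty_bundle k.
Proof.
apply/ffunP => j'; rewrite !ffunE /pp /bidval.
case: (eqVneq j' j) => [->|ne].
  by rewrite gridval_lt; case: ltnP; rewrite ffunE ?eqxx.
rewrite ltNge gridval_le1 /=.
by case: ltnP; rewrite ffunE // (negbTE ne).
Qed.

Lemma util_pp (b : bid k m) j i : b \in Bm R v ->
  ww j i * util v b (pp j i) = if (i < b j)%N then 1 / m%:R else 0.
Proof.
move=> hb; rewrite /util won_pp.
case: ltnP => hi.
  rewrite sum_ej /pp eqxx.
  have ht : tt_ i < value R v (ej j).
    have := bid_le_value b j hb; apply: lt_le_trans.
    by rewrite /tt_ /bidval gridval_lt.
  by rewrite /ww ht divfK // subr_eq0 gt_eqF.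
rewrite big1; last by move=> i0 _; rewrite ffunE.
by rewrite /value /gridval hv mul0r subr0 mulr0.
Qed.

Lemma sum_ind (a : nat) (c : R) : (a <= m)%N ->
  \sum_(0 <= i < m) (if (i < a)%N then c else 0) = c *+ a.
Proof.
move=> ha; rewrite (big_cat_nat (leq0n a) ha) /=.
rewrite (eq_big_nat _ _ (F2 := fun _ => c)); last by move=> i /andP [_ ->].
rewrite [X in _ + X]big1_seq ?addr0; last first.
  by move=> i /andP [_]; rewrite mem_index_iota => /andP [h _]; rewrite ltnNge h.
by rewrite sumr_const_nat subn0.
Qed.

Lemma in_map_nat (X : Type) (f : nat -> X) (s : seq nat) x :
  List.In x (map f s) -> exists2 i, i \in s & x = f i.
Proof.
elim: s => //= a s IH [<-|h]; first by exists a; rewrite ?inE ?eqxx.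
by have [i hi ->] := IH h; exists i; rewrite // inE hi orbT.
Qed.

End Helpers.

Theorem lemma6p2 (R : realFieldType) (k m : nat) (hm : (0 < m)%N)
  (v : bundle k -> 'I_m.+1) (hv : nat_of_ord (v (empty_bundle k)) = 0%N) :
  admissible (Bm R v) (GammaOB R (m:=m)) m.+1 (1 / m%:R) /\
  implementable (Bm R v) (GammaOB R (m:=m)) (util v) m.
Proof.
split.
  split.
    move=> b b' _ _ H; apply/ffunP => j; apply: (@gridval_inj R m hm); exact: H.
  split.
    move=> j.
    apply: (@leq_trans (size [seq gridval R a | a <- enum 'I_m.+1]));
      last by rewrite size_map size_enum_ord.
    apply: uniq_leq_size; first exact: undup_uniq.
    move=> x; rewrite mem_undup => /mapP [b _ ->].
    by apply: map_f; rewrite mem_enum.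
  move=> j b b' _ _; rewrite /GammaOB /bidval /gridval => hne.
  rewrite -mulrBl normrM [`|m%:R^-1|]ger0_norm ?invr_ge0 ?ler0n // mul1r.
  rewrite ler_pMl; last by rewrite invr_gt0 ltr0n.
  have : (b j : nat) != b' j by apply: contra hne => /eqP ->.
  case: (ltngtP (b j) (b' j)) => // h _.
    rewrite distrC -(natrB _ (ltnW h)) ger0_norm ?ler0n //.
    by rewrite ler1n subn_gt0.
  rewrite -(natrB _ (ltnW h)) ger0_norm ?ler0n //.
  by rewrite ler1n subn_gt0.
move=> j.
exists [seq (ww R k m v j i, pp R k m j i) | i <- iota 0 m].
split; first by rewrite size_map size_iota.
split.
  move=> x hx; have [i hi ->] := in_map_nat _ _ _ _ hx; simpl; split.
    rewrite /ww; case: ifP => // h.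
    apply: divr_ge0; last by rewrite subr_ge0 ltW.
    by apply: divr_ge0; rewrite ?ler01 ?ler0n.
  move=> j'; rewrite /pp; case: ifP => _; last by rewrite ler01 lexx.
  rewrite /tt_; apply/andP; split; first by apply: divr_ge0; rewrite ler0n.
  rewrite ler_pdivrMr ?ltr0n // mul1r ler_nat.
  by move: hi; rewrite mem_iota add0n => /andP [_ /ltnW].
move=> b b' hb hb'.
rewrite big_map (eq_big_seq (fun i => (if (i < b j)%N then 1 / m%:R else 0)
   - (if (i < b' j)%N then 1 / m%:R else 0))); last first.
  by move=> i _; rewrite /= mulrBr (@util_pp R k m hm v hv) // (@util_pp R k m hm v hv).
have E : forall a : 'I_m.+1, \sum_(i <- iota 0 m) (if (i < a)%N then 1 / m%:R else 0)
   = (1 / m%:R : R) *+ a.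
  move=> a; have := @sum_ind R m a (1 / m%:R); rewrite /index_iota subn0; apply.
  by rewrite -ltnS.
rewrite sumrB (E (b j)) (E (b' j)) /GammaOB /bidval /gridval.
by rewrite !mulr_natl !div1r.
Qed.
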